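(* Let $p$ be an odd prime, $x\in\mathbb Z_p$ and $x\not\equiv0\pmod p$. Then $$\sum_{k=0}^{\frac{p-1}2}\frac{\binom{2k}k^2}{16^k}\Big(x^k-\Big(\frac xp\Big)x^{-k}\Big)\equiv0\pmod p.$$
   Context: $\mathbb Z_p$ denotes the set of rational numbers whose denominator (in lowest terms) is prime to $p$; congruences are in this ring. For $a\in\mathbb Z_p$, $\big(\frac ap\big)$ is the Legendre symbol of the residue of $a$ modulo $p$. *)

(* Defs.v *)
From mathcomp Require Import all_boot all_order all_algebra.
Set Implicit Arguments. Unset Strict Implicit. Unset Printing Implicit Defensive.
Import Order.TTheory GRing.Theory Num.Theory.
Local Open Scope ring_scope.

(* r belongs to Z_p = { rationals whose lowest-terms denominator is prime to p } *)
Definition pint (p : nat) (r : rat) : bool := coprime `|denq r|%N p.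

Definition congrp (p : nat) (a b : rat) : bool :=
  [&& pint p a, pint p b & pint p ((a - b) / p%:R)].

Definition legendre (p : nat) (a : rat) : rat :=
  if congrp p a 0 then 0
  else if [exists y : 'I_p, congrp p ((nat_of_ord y)%:R ^+ 2) a] then 1
  else -1.

(* Main.v *)
Require Import Defs.
From mathcomp Require Import all_boot all_order all_algebra all_field.
From mathcomp Require Import ring zify.
Import Order.TTheory GRing.Theory Num.Theory.
Local Open Scope ring_scope.


Section Loc.
Variable p : nat.
Hypothesis hp : prime p.

Definition phi (r : rat) : 'F_p := (numq r)%:~R / (denq r)%:~R.

Lemma natF_eq0 (m : nat) : (m%:R == 0 :> 'F_p) = (p %| m)%N.
Proof. by rewrite (dvdn_pcharf (pchar_Fp hp)). Qed.

Lemma intF_eq0 (z : int) : (z%:~R == 0 :> 'F_p) = (p %| `|z|)%N.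
Proof.
case: z => m; first by rewrite -[_%:~R]/(m%:R) natF_eq0.
by rewrite NegzE mulrNz oppr_eq0 -[(Posz _)%:~R]/(m.+1%:R) natF_eq0 abszN.
Qed.

Lemma cop_nz (d : int) : coprime `|d| p -> (d%:~R != 0 :> 'F_p).
Proof.
move=> c; rewrite intF_eq0; apply/negP => dv.
move: c; rewrite coprime_sym prime_coprime // dv //.
Qed.

Lemma cop_nzQ (d : int) : coprime `|d| p -> (d%:~R != 0 :> rat).
Proof.
move=> c; rewrite intr_eq0; apply/negP => /eqP d0; move: c; rewrite d0 /=.
by rewrite /coprime gcd0n => /eqP p1; move: hp; rewrite p1.
Qed.

Lemma frac_eq (n d : int) : coprime `|d| p ->
  numq (n%:~R / d%:~R) * d = n * denq (n%:~R / d%:~R).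
Proof.
move=> c; set r : rat := (n%:~R / d%:~R).
have : r = (numq r)%:~R / (denq r)%:~R by rewrite divq_num_den.
rewrite {1}/r => /eqP; rewrite eqr_div; last 2 first.
- exact: cop_nzQ.
- by rewrite intr_eq0 denq_neq0.
by rewrite -!intrM => /eqP /intr_inj ->.
Qed.

Lemma pintP r : reflect (exists n d : int, coprime `|d| p /\ r = n%:~R / d%:~R) (pint p r).
Proof.
apply: (iffP idP).
  by move=> h; exists (numq r), (denq r); split => //; rewrite divq_num_den.
move=> [n [d [c ->]]]; rewrite /pint.
have e := frac_eq n d c.
apply: (coprime_dvdl _ c).
have : (`|denq (n%:~R / d%:~R)| %| `|numq (n%:~R / d%:~R)| * `|d|)%N.
  by rewrite -abszM e abszM dvdn_mull.
by rewrite Gauss_dvdr // coprime_sym coprime_num_den.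
Qed.

Lemma phi_frac n d : coprime `|d| p -> phi (n%:~R / d%:~R) = n%:~R / d%:~R.
Proof.
move=> c; rewrite /phi; apply/eqP; rewrite eqr_div; last 2 first.
- apply: cop_nz; apply/pintP; by exists n, d.
- exact: cop_nz.
by rewrite -!intrM frac_eq.
Qed.

Definition good (r : rat) (a : 'F_p) := pint p r /\ phi r = a.

Lemma goodE r a : good r a ->
  exists n d : int, [/\ coprime `|d| p, r = n%:~R / d%:~R & a = n%:~R / d%:~R].
Proof.
move=> [/pintP [n [d [c e]]] <-]; exists n, d; split => //.
by rewrite e phi_frac.
Qed.

Lemma goodI n d : coprime `|d| p -> good (n%:~R / d%:~R) (n%:~R / d%:~R).
Proof.
move=> c; split; last exact: phi_frac.
by apply/pintP; exists n, d.
Qed.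

Lemma cop_mul (d1 d2 : int) : coprime `|d1| p -> coprime `|d2| p -> coprime `|d1 * d2| p.
Proof. by move=> c1 c2; rewrite abszM coprimeMl c1 c2. Qed.

Lemma good_add {r s a b} : good r a -> good s b -> good (r + s) (a + b).
Proof.
move=> /goodE [n1 [d1 [c1 -> ->]]] /goodE [n2 [d2 [c2 -> ->]]].
rewrite !addf_div ?cop_nz ?cop_nzQ // -!intrM -!intrD.
apply: (goodI (n1 * d2 + n2 * d1) (d1 * d2)); exact: cop_mul.
Qed.

Lemma good_mul {r s a b} : good r a -> good s b -> good (r * s) (a * b).
Proof.
move=> /goodE [n1 [d1 [c1 -> ->]]] /goodE [n2 [d2 [c2 -> ->]]].
rewrite !mulf_div -!intrM.
apply: (goodI (n1 * n2) (d1 * d2)); exact: cop_mul.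
Qed.

Lemma good_int (z : int) : good z%:~R z%:~R.
Proof.
have c : coprime `|1%:Z| p by rewrite /= coprime1n.
by have := goodI z 1 c; rewrite !divr1.
Qed.

Lemma good_nat (m : nat) : good m%:R m%:R.
Proof. exact: (good_int m). Qed.

Lemma good_opp {r a} : good r a -> good (- r) (- a).
Proof.
move=> h; have := good_mul (good_int (-1)) h.
by rewrite !mulrN1z !mulN1r.
Qed.

Lemma good_inv {r a} : good r a -> a != 0 -> good r^-1 a^-1.
Proof.
move=> /goodE [n [d [c -> ->]]] a0.
have cn : coprime `|n| p.
  rewrite coprime_sym prime_coprime //; apply/negP => dv.
  by move: a0; rewrite mulf_eq0 -intF_eq0 in dv *; rewrite dv.
by rewrite !invf_div; exact: goodI.
Qed.

Lemma good_exp {r a} k : good r a -> good (r ^+ k) (a ^+ k).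
Proof.
move=> h; elim: k => [|k ih]; first by rewrite !expr0; exact: good_nat 1.
by rewrite !exprS; exact: good_mul.
Qed.

Lemma good_sum N (F : nat -> rat) (G : nat -> 'F_p) :
  (forall k, (k < N)%N -> good (F k) (G k)) ->
  good (\sum_(0 <= k < N) F k) (\sum_(0 <= k < N) G k).
Proof.
move=> h; rewrite !big_nat; apply: (big_ind2 good) => //.
- exact: good_nat 0.
- by move=> *; exact: good_add.
Qed.

Lemma good_p : good p%:R 0.
Proof. by rewrite -(pchar_Fp_0 hp); exact: good_nat. Qed.

Lemma congr_phi a b : congrp p a b -> phi a = phi b.
Proof.
case/and3P => pa pb pab.
have h : good (a - b) (phi ((a - b) / p%:R) * 0).
  have := good_mul (conj pab erefl) good_p.
  by rewrite divfK // pnatr_eq0; case: p hp.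
have e1 : phi (a - b) = phi a - phi b.
  by have [_ <-] := good_add (conj pa erefl) (good_opp (conj pb erefl)).
by apply/eqP; rewrite -subr_eq0 -e1 h.2 mulr0.
Qed.

Lemma congrP a b : pint p a -> pint p b -> phi a = phi b -> congrp p a b.
Proof.
move=> pa pb e; rewrite /congrp pa pb /=.
have := good_add (conj pa erefl) (good_opp (conj pb erefl)).
rewrite e subrr => /goodE [n [d [c -> /esym]]].
move/eqP; rewrite mulf_eq0 invr_eq0 (negbTE (cop_nz d c)) orbF intF_eq0 => dv.
have : (p%:Z %| n)%Z by rewrite dvdzE.
case/dvdzP => q ->.
apply/pintP; exists q, d; split => //.
rewrite intrM mulrAC -[(Posz p)%:~R]/(p%:R : rat) mulfK // pnatr_eq0.
by case: p hp.
Qed.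
End Loc.

Section F.
Variable p : nat.
Hypothesis hp : prime p.
Hypothesis op : odd p.
Let n := (p.-1)./2.

Lemma hpn : p = n.*2.+1.
Proof.
rewrite /n; case: p hp op => // q _ /= oq.
by rewrite -[q in LHS](odd_double_half q) (negbTE oq) -muln2.
Qed.

Lemma natFp0 (m : nat) : (m%:R == 0 :> 'F_p) = (p %| m)%N.
Proof. by rewrite (dvdn_pcharf (pchar_Fp hp)). Qed.

Lemma hN : 2 * n%:R + 1 = 0 :> 'F_p.
Proof.
have : ((n.*2.+1)%:R : 'F_p) = 0 by apply/eqP; rewrite natFp0 -hpn dvdnn.
by rewrite -(addn1 (n.*2)) natrD -mul2n natrM.
Qed.

Lemma small_nz (m : nat) : (0 < m)%N -> (m < p)%N -> (m%:R != 0 :> 'F_p).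
Proof. by move=> m0 mp; rewrite natFp0; apply/negP => /(dvdn_leq m0); rewrite leqNgt mp. Qed.

Lemma binomF k : (k <= n)%N -> ('C(k.*2, k)%:R : 'F_p) = (-4) ^+ k * 'C(n, k)%:R.
Proof.
elim: k => [|k ih] kn; first by rewrite !bin0 expr0 mul1r.
have ih' := ih (ltnW kn).
have K0 : (k.+1%:R != 0 :> 'F_p).
  by apply: small_nz => //; rewrite hpn; apply: (leq_trans kn); rewrite -addnn; lia.
have f1 : (k.+1 * 'C(k.+1.*2, k.+1) = 2 * (k.+1 * 'C(k.*2.+1, k)))%N.
  by rewrite -mul_bin_diag doubleS /= mulnA mul2n.
have f2 : (k.*2.+1 * 'C(k.*2, k) = k.+1 * 'C(k.*2.+1, k))%N.
  have := mul_bin_down (k.*2.+1) k; rewrite /= => ->.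
  by congr (_ * _)%N; rewrite -addnn; lia.
have f3 := mul_bin_left n k.
move: f1 f2 f3 => /(congr1 (fun m => m%:R : 'F_p)) e1 /(congr1 (fun m => m%:R : 'F_p)) e2
  /(congr1 (fun m => m%:R : 'F_p)) e3.
rewrite !natrM in e1 e2 e3; rewrite natrB in e3; last exact: ltnW.
apply: (mulfI K0); apply: (mulfI K0).
rewrite e1 -e2 ih' [X in _ = _ * X]mulrCA e3.
have -> : (k.*2.+1)%:R = -2 * (n%:R - k%:R) :> 'F_p.
  apply/eqP; rewrite -subr_eq0 -[X in _ == X]hN -(addn1 (k.*2)) natrD -(mul2n k) natrM; apply/eqP; ring.
rewrite exprS; ring.
Qed.

Lemma hp1 : p.-1 = n.*2.
Proof. by rewrite {1}hpn. Qed.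

Lemma fermat (a : 'F_p) : a != 0 -> a ^+ n.*2 = 1.
Proof.
move=> a0; have e := expf_card a; rewrite card_Fp // in e.
rewrite -[X in a ^+ X](prednK (prime_gt0 hp)) exprS hp1 in e.
by apply: (mulfI a0); rewrite mulr1.
Qed.

Lemma n_gt0 : (0 < n)%N.
Proof.
have := prime_gt1 hp; rewrite {1}hpn ltnS -muln2.
by rewrite muln_gt0 andbT.
Qed.

Lemma lt_p (i : nat) : (i <= n)%N -> (i < p)%N.
Proof. by move=> h; rewrite hpn ltnS; apply: (leq_trans h); rewrite -addnn leq_addl. Qed.

Definition lsym (a : 'F_p) : 'F_p :=
  if [exists y : 'I_p, ((y : nat)%:R ^+ 2 == a)] then 1 else -1.

Lemma euler (a : 'F_p) : a != 0 -> a ^+ n = lsym a.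
Proof.
move=> a0; rewrite /lsym; case: ifP.
  case/existsP => y /eqP ya.
  have y0 : (y : nat)%:R != 0 :> 'F_p.
    by apply: contraNneq a0 => y0; rewrite -ya y0 expr0n.
  by rewrite -ya -exprM mul2n fermat.
move/negbT => nsq.
have : (a ^+ n) ^+ 2 == 1 by rewrite -exprM muln2 fermat.
rewrite sqrf_eq1 => /orP [/eqP an1|/eqP //].
exfalso.
pose P : {poly 'F_p} := 'X^n - 1.
pose rs := a :: [seq ((i%:R : 'F_p) ^+ 2) | i <- iota 1 n].
have : (size rs < size P)%N.
  apply: max_poly_roots.
  - by rewrite -size_poly_eq0 size_Xn_sub_1 // n_gt0.
  - rewrite /= /root !hornerE an1 subrr eqxx /=.
    apply/allP => z /mapP [i]; rewrite mem_iota => /andP [i1 i2] ->.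
    rewrite /root !hornerE -exprM mul2n fermat ?subrr //.
    by apply: small_nz => //; apply: lt_p; rewrite -ltnS -(addn1 n) addnC.
  - rewrite /= map_inj_in_uniq ?iota_uniq ?andbT.
      apply/mapP => [[i]]; rewrite mem_iota => /andP [i1 i2] ai.
      move/existsP: nsq; apply.
      have ip : (i < p)%N by apply: lt_p; rewrite -ltnS -(addn1 n) addnC.
      by exists (Ordinal ip); rewrite /= ai.
    move=> i j; rewrite !mem_iota => /andP [i1 i2] /andP [j1 j2] /eqP.
    have ip : (i < p)%N by apply: lt_p; rewrite -ltnS -(addn1 n) addnC.
    have jp : (j < p)%N by apply: lt_p; rewrite -ltnS -(addn1 n) addnC.
    rewrite eqf_sqr => /orP [/eqP e|/eqP e].
      by have := val_Fp_nat hp i; rewrite e val_Fp_nat // !modn_small.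
    exfalso; have : ((i + j)%:R == 0 :> 'F_p) by rewrite natrD e addNr.
    apply/negP; apply: small_nz; first by rewrite addn_gt0 i1.
    rewrite hpn ltnS -addnn; apply: leq_add; rewrite -ltnS -(addn1 n) addnC //.
by rewrite size_Xn_sub_1 ?n_gt0 //= size_map size_iota ltnn.
Qed.

Lemma h16 : (16 : 'F_p) != 0.
Proof.
  have -> : (16 : 'F_p) = 2 ^+ 4 by rewrite -natrX.
  rewrite expf_neq0 // small_nz // hpn ltnS.
  have := n_gt0; rewrite -addnn; case: n => // m _; lia.
Qed.

Lemma final (a : 'F_p) : a != 0 ->
  \sum_(0 <= k < n.+1) (('C(k.*2, k))%:R ^+ 2 / 16 ^+ k) * (a ^+ k - lsym a * (a ^+ k)^-1) = 0.
Proof.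
move=> a0; set l := lsym a.
have el := euler a a0; rewrite -/l in el.
have l0 : l != 0 by rewrite -el expf_neq0.
have := h16 => h16.
rewrite (eq_big_nat _ _ (F2 := fun k => 'C(n, k)%:R ^+ 2 * (a ^+ k - l * (a ^+ k)^-1))); last first.
  move=> k /andP [_ kn]; rewrite binomF // exprMn -exprM mulnC exprM.
  have -> : (-4 : 'F_p) ^+ 2 = 16 by rewrite sqrrN -natrX.
  by rewrite [16 ^+ k * _]mulrC mulfK // expf_neq0.
rewrite (eq_big_nat _ _ (F2 := fun k => 'C(n, k)%:R ^+ 2 * a ^+ k - l * ('C(n, k)%:R ^+ 2 * (a ^+ k)^-1))); last first.
  by move=> k _; rewrite mulrBr mulrCA.
rewrite sumrB -mulr_sumr; apply/eqP; rewrite subr_eq0; apply/eqP.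
rewrite big_nat_rev /= mulr_sumr; apply: eq_big_nat => k /andP [_ kn].
have kn' : (k <= n)%N := kn.
rewrite add0n subSS bin_sub //.
have -> : a ^+ (n - k) = l * (a ^+ k)^-1.
  by rewrite -el -{2}(subnK kn') exprD mulfK // expf_neq0.
by rewrite mulrCA.
Qed.
End F.

Theorem theorem2p7 (p : nat) (x : rat) :
  prime p -> odd p -> pint p x -> ~~ congrp p x 0 ->
  congrp p
    (\sum_(0 <= k < (p.-1)./2.+1)
       (('C(k.*2, k))%:R ^+ 2 / 16 ^+ k) * (x ^+ k - legendre p x * x ^- k))
    0.
Proof.
move=> hp op px nx.
set a := phi p x.
have gx : good p x a by [].
have g0 : good p 0 0 by have := good_nat _ hp 0; rewrite !mulr0n.
have a0 : a != 0.
  apply: contraNneq nx => a0; apply: (congrP _ hp) => //; first exact: g0.1.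
  by rewrite g0.2.
have gl : good p (legendre p x) (lsym p a).
  rewrite /legendre (negbTE nx) /lsym.
  have -> : [exists y : 'I_p, congrp p ((nat_of_ord y)%:R ^+ 2) x] =
            [exists y : 'I_p, ((y : nat)%:R ^+ 2 == a :> 'F_p)].
    apply: eq_existsb => y.
    have gy := good_exp _ hp 2 (good_nat _ hp y).
    apply/idP/idP.
      by move/(congr_phi _ hp); rewrite gy.2 => ->.
    by move/eqP => e; apply: (congrP _ hp) => //; [exact: gy.1|rewrite gy.2].
  have g1 : good p 1 1 by have := good_nat _ hp 1; rewrite !mulr1n.
  case: ifP => _; first exact: g1.
  exact: (good_opp _ hp g1).
have gs := good_sum _ hp ((p.-1)./2.+1)
    (fun k => (('C(k.*2, k))%:R ^+ 2 / 16 ^+ k) * (x ^+ k - legendre p x * x ^- k))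
    (fun k => ('C(k.*2, k)%:R ^+ 2 / 16 ^+ k) * (a ^+ k - lsym p a * (a ^+ k)^-1)).
have ht : forall k, (k < (p.-1)./2.+1)%N ->
    good p ((('C(k.*2, k))%:R ^+ 2 / 16 ^+ k) * (x ^+ k - legendre p x * x ^- k))
      (('C(k.*2, k)%:R ^+ 2 / 16 ^+ k) * (a ^+ k - lsym p a * (a ^+ k)^-1)).
  move=> k _.
  apply: (good_mul _ hp); first apply: (good_mul _ hp).
  + exact: (good_exp _ hp _ (good_nat _ hp _)).
  + apply: (good_inv _ hp); first exact: (good_exp _ hp _ (good_nat _ hp 16)).
    by rewrite expf_neq0 // h16.
  + apply: (good_add _ hp); first exact: (good_exp _ hp).
    apply: (good_opp _ hp); apply: (good_mul _ hp) => //.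
    apply: (good_inv _ hp); first exact: (good_exp _ hp).
    by rewrite expf_neq0.
have [g1 g2] := gs ht.
apply: (congrP _ hp) => //; first exact: g0.1.
by rewrite g0.2 g2 final.
Qed.
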